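(* Let $k:[1,\infty)\to(0,\infty)$ be a nonincreasing function such that $\int_1^\infty\frac{k(s)}{s}\,ds<\frac1{10}$. Let $x:[1,\infty)\to(0,\infty)$ be a differentiable function such that for all $t\ge1$, $$x(t)\le t\,x(1)\quad\text{and}\quad x'(t)\le\int_t^\infty x(s)\frac{k(s)}{s^2}\,ds.$$ Then there exists a constant $C>0$ depending only on $k$ such that $x(t)\le C\,x(1)$ for all $t\ge1$. *)

(* Defs.v *)
From Stdlib Require Import Reals.
From Coquelicot Require Import Coquelicot.
Open Scope R_scope.

Definition improper_int_from (f : R -> R) (a v : R) : Prop :=
  is_RInt_gen f (at_point a) (Rbar_locally p_infty) v.

Definition diff_on_1_infty (x x' : R -> R) : Prop :=
  (forall t, 1 < t -> is_derive x t (x' t)) /\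
  filterlim (fun h => (x (1 + h) - x 1) / h) (at_right 0) (locally (x' 1)).

(* Main.v *)
Require Import Defs.
From Stdlib Require Import Reals Lra.
From Coquelicot Require Import Coquelicot.
Open Scope R_scope.

Lemma imp_approx (f : R -> R) a v : improper_int_from f a v ->
  forall eps, 0 < eps -> exists M, forall b, M < b ->
    exists y, is_RInt f a b y /\ Rabs (y - v) < eps.
Proof.
  intros H eps He. unfold improper_int_from, is_RInt_gen, filterlimi, filter_le in H.
  assert (Hl : locally v (fun y => Rabs (y - v) < eps)).
  { exists (mkposreal eps He). intros y Hy. exact Hy. }
  specialize (H _ Hl). destruct H as [Q R0 HQ HR Himp]. destruct HR as [M HM].
  exists M. intros b Hb. exact (Himp a b HQ (HM b Hb)).
Qed.

Lemma cmp (f g : R -> R) a J B : improper_int_from f a J ->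
  (exists M, forall b, M < b -> a <= b /\ ex_RInt g a b /\ RInt g a b <= B /\
     forall s, a <= s <= b -> f s <= g s) -> J <= B.
Proof.
  intros H [M HM]. apply Rnot_lt_le; intro HBJ.
  destruct (imp_approx _ _ _ H (J - B)) as [M' HM']; [lra|].
  set (b := Rmax M M' + 1).
  assert (H1 : M < b) by (unfold b; generalize (Rmax_l M M'); lra).
  assert (H2 : M' < b) by (unfold b; generalize (Rmax_r M M'); lra).
  destruct (HM' b H2) as [y [Hy Hyv]].
  destruct (HM b H1) as [Hab [Hg [HgB Hfg]]].
  assert (Hle : y <= RInt g a b).
  { rewrite <- (is_RInt_unique _ _ _ _ Hy). apply RInt_le; auto.
    exists y; auto. intros; apply Hfg; lra. }
  apply Rabs_def2 in Hyv. lra.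
Qed.

Lemma dec_lemma (g : R -> R) a T : a <= T ->
  (forall s, a <= s < T -> forall e, 0 < e -> exists d, 0 < d /\
      forall u, s <= u < s + d -> Rabs (g u - g s) < e) ->
  (forall s, a < s <= T -> exists d, 0 < d /\ forall h, 0 < h < d -> g s < g (s - h)) ->
  g T <= g a.
Proof.
  intros HaT Hrc Hld. apply Rnot_lt_le; intro Hlt.
  set (D := fun t => a <= t <= T /\ g t < g T).
  assert (Hb : bound D). { exists T. intros t [Ht _]. lra. }
  assert (Hne : exists t, D t). { exists a. split; lra. }
  destruct (completeness D Hb Hne) as [s [Hub Hlub]].
  assert (Has : a <= s) by (apply Hub; split; lra).
  assert (HsT : s <= T) by (apply Hlub; intros t [Ht _]; lra).
  destruct (Rlt_or_le (g s) (g T)) as [Hgs|Hgs].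
  - assert (HsT' : s < T). { destruct HsT as [|E]; auto. subst s. lra. }
    destruct (Hrc s (conj Has HsT') (g T - g s)) as [d [Hd Hu]]; [lra|].
    set (u := Rmin (s + d/2) T).
    assert (Hu1 : s < u) by (unfold u; apply Rmin_glb_lt; lra).
    assert (Hu2 : u <= T) by (unfold u; apply Rmin_r).
    assert (Hu3 : u <= s + d/2) by (unfold u; apply Rmin_l).
    assert (Du : D u).
    { split; [lra|]. specialize (Hu u ltac:(lra)). apply Rabs_def2 in Hu. lra. }
    specialize (Hub u Du). lra.
  - assert (Has' : a < s). { destruct Has as [|E]; auto. subst s. lra. }
    destruct (Hld s (conj Has' HsT)) as [d [Hd Hh]].
    assert (s <= s - d/2); [|lra].
    apply Hlub. intros t [Ht Hgt].
    destruct (Rle_or_lt t (s - d/2)) as [|Hts]; auto.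
    assert (Hts2 : t <= s) by (apply Hub; split; auto).
    destruct Hts2 as [Hts2|E].
    + specialize (Hh (s - t) ltac:(lra)). replace (s - (s - t)) with t in Hh by ring. lra.
    + subst t. lra.
Qed.
Lemma kf_bounds (k : R -> R) (k_pos : forall s, 1 <= s -> 0 < k s)
  (k_noninc : forall s u, 1 <= s -> s <= u -> k u <= k s) :
  forall s, 1 <= s -> 0 < k s / s <= k 1.
Proof.
  intros s Hs. assert (H0 := k_pos s Hs). assert (H1 := k_noninc 1 s (Rle_refl 1) Hs).
  split. apply Rdiv_lt_0_compat; lra.
  apply Rle_trans with (k s); [|lra].
  unfold Rdiv. rewrite <- (Rmult_1_r (k s)) at 2. apply Rmult_le_compat_l; [lra|].
  rewrite <- Rinv_1. apply Rinv_le_contravar; lra.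
Qed.

Lemma kf_mono (k : R -> R) (k_pos : forall s, 1 <= s -> 0 < k s)
  (k_noninc : forall s u, 1 <= s -> s <= u -> k u <= k s) :
  forall u t, 1 <= u -> u <= t -> k t / t <= k u / u.
Proof.
  intros u t Hu Hut. unfold Rdiv. apply Rmult_le_compat.
  - generalize (k_pos t ltac:(lra)); lra.
  - left; apply Rinv_0_lt_compat; lra.
  - apply k_noninc; lra.
  - apply Rinv_le_contravar; lra.
Qed.

Lemma G_ex (k : R -> R) I (HI : improper_int_from (fun s => k s / s) 1 I) :
  forall b, 1 <= b -> ex_RInt (fun s => k s / s) 1 b.
Proof.
  intros b Hb. destruct (imp_approx _ _ _ HI 1 Rlt_0_1) as [M HM].
  set (B := Rmax M b + 1).
  destruct (HM B) as [y [Hy _]]. unfold B; generalize (Rmax_l M b); lra.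
  apply (@ex_RInt_Chasles_1 R_CompleteNormedModule _ 1 b B). unfold B; generalize (Rmax_r M b); lra.
  exists y; exact Hy.
Qed.

Lemma G_ex2 (k : R -> R) I (HI : improper_int_from (fun s => k s / s) 1 I) :
  forall a b, 1 <= a -> a <= b -> ex_RInt (fun s => k s / s) a b.
Proof.
  intros a b Ha Hab. apply (@ex_RInt_Chasles_2 R_CompleteNormedModule _ 1 a b). lra. apply (G_ex k I HI). lra.
Qed.

Lemma G_chasles (k : R -> R) I (HI : improper_int_from (fun s => k s / s) 1 I) :
  forall a b, 1 <= a -> a <= b ->
  RInt (fun s => k s / s) a b = RInt (fun s => k s / s) 1 b - RInt (fun s => k s / s) 1 a.
Proof.
  intros a b Ha Hab. rewrite <- (@RInt_Chasles R_CompleteNormedModule _ 1 a b).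
  unfold plus; simpl. lra.
  apply (G_ex k I HI); lra. apply (G_ex2 k I HI); lra.
Qed.

Lemma G_le (k : R -> R) (k_pos : forall s, 1 <= s -> 0 < k s)
  (k_noninc : forall s u, 1 <= s -> s <= u -> k u <= k s)
  I (HI : improper_int_from (fun s => k s / s) 1 I) :
  forall t, 1 <= t -> 0 <= RInt (fun s => k s / s) 1 t <= I.
Proof.
  intros t Ht. split.
  { apply RInt_ge_0; auto. apply (G_ex k I HI); lra.
    intros x Hx. generalize (kf_bounds k k_pos k_noninc x ltac:(lra)); lra. }
  apply Rnot_lt_le; intro HlT.
  destruct (imp_approx _ _ _ HI (RInt (fun s => k s / s) 1 t - I)) as [M HM]; [lra|].
  set (b := Rmax M t + 1).
  destruct (HM b) as [y [Hy Hyv]]. unfold b; generalize (Rmax_l M t); lra.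
  assert (Htb : t <= b) by (unfold b; generalize (Rmax_r M t); lra).
  rewrite <- (is_RInt_unique _ _ _ _ Hy) in Hyv.
  assert (H0 : 0 <= RInt (fun s => k s / s) t b).
  { apply RInt_ge_0; auto. apply (G_ex2 k I HI); lra.
    intros x Hx. generalize (kf_bounds k k_pos k_noninc x ltac:(lra)); lra. }
  rewrite (G_chasles k I HI t b Ht Htb) in H0.
  apply Rabs_def2 in Hyv. lra.
Qed.

Lemma G_left (k : R -> R) (k_pos : forall s, 1 <= s -> 0 < k s)
  (k_noninc : forall s u, 1 <= s -> s <= u -> k u <= k s)
  I (HI : improper_int_from (fun s => k s / s) 1 I) :
  forall t h, 0 < h -> 1 <= t - h ->
  h * (k t / t) <= RInt (fun s => k s / s) 1 t - RInt (fun s => k s / s) 1 (t - h).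
Proof.
  intros t h Hh Hth. rewrite <- (G_chasles k I HI); try lra.
  replace (h * (k t / t)) with (RInt (fun _ => k t / t) (t - h) t).
  apply RInt_le. lra. apply ex_RInt_const. apply (G_ex2 k I HI); lra.
  intros x Hx. apply (kf_mono k k_pos k_noninc); lra.
  rewrite RInt_const. unfold scal; simpl; unfold mult; simpl. ring.
Qed.

Lemma G_right (k : R -> R) (k_pos : forall s, 1 <= s -> 0 < k s)
  (k_noninc : forall s u, 1 <= s -> s <= u -> k u <= k s)
  I (HI : improper_int_from (fun s => k s / s) 1 I) :
  forall s u, 1 <= s -> s <= u ->
  0 <= RInt (fun s => k s / s) 1 u - RInt (fun s => k s / s) 1 s <= (u - s) * k 1.
Proof.
  intros s u Hs Hsu. rewrite <- (G_chasles k I HI); try lra. split.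
  { apply RInt_ge_0; auto. apply (G_ex2 k I HI); lra.
    intros x Hx. generalize (kf_bounds k k_pos k_noninc x ltac:(lra)); lra. }
  replace ((u - s) * k 1) with (RInt (fun _ => k 1) s u).
  apply RInt_le. lra. apply (G_ex2 k I HI); lra. apply ex_RInt_const.
  intros x Hx. generalize (kf_bounds k k_pos k_noninc x ltac:(lra)); lra.
  rewrite RInt_const. unfold scal; simpl; unfold mult; simpl. ring.
Qed.
Lemma xrc (x x' : R -> R) (xd : diff_on_1_infty x x') :
  forall s, 1 <= s -> forall e, 0 < e -> exists d, 0 < d /\
    forall u, s <= u < s + d -> Rabs (x u - x s) < e.
Proof.
  destruct xd as [Hd H1]. intros s Hs e He.
  destruct Hs as [Hs|Hs].
  - assert (Hc : continuity_pt x s).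
    { apply continuity_pt_filterlim. apply (ex_derive_continuous x s).
      exists (x' s). apply Hd; lra. }
    destruct (Hc e He) as [a [Ha Hu]]. exists a. split; auto.
    intros u Hu'. destruct (Req_dec s u) as [E|E].
    + subst u. rewrite Rminus_diag, Rabs_R0. lra.
    + apply (Hu u). split. split; [exact I|exact E].
      simpl. unfold R_dist. rewrite Rabs_right; lra.
  - subst s.
    assert (Hl : locally (x' 1) (fun y => Rabs (y - x' 1) < 1)).
    { exists (mkposreal 1 Rlt_0_1). intros y Hy. exact Hy. }
    specialize (H1 _ Hl). destruct H1 as [d Hdd].
    set (L := Rabs (x' 1) + 1).
    assert (HL : 0 < L) by (unfold L; generalize (Rabs_pos (x' 1)); lra).
    exists (Rmin d (e / L)). split.
    { apply Rmin_glb_lt. apply cond_pos. apply Rdiv_lt_0_compat; lra. }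
    intros u [Hu1 Hu2]. destruct Hu1 as [Hu1|E].
    2:{ subst u. rewrite Rminus_diag, Rabs_R0. lra. }
    assert (Hud : u - 1 < d) by (generalize (Rmin_l d (e/L)); lra).
    assert (Hue : u - 1 < e / L) by (generalize (Rmin_r d (e/L)); lra).
    assert (Hq : Rabs ((x (1 + (u - 1)) - x 1) / (u - 1) - x' 1) < 1).
    { apply (Hdd (u - 1)). 2: lra. unfold ball; simpl; unfold AbsRing_ball; simpl.
      unfold abs, minus, plus, opp; simpl. rewrite Ropp_0, Rplus_0_r, Rabs_right; lra. }
    replace (1 + (u - 1)) with u in Hq by ring.
    set (q := (x u - x 1) / (u - 1)) in Hq.
    assert (Eq : x u - x 1 = q * (u - 1)) by (unfold q; field; lra).
    rewrite Eq, Rabs_mult, (Rabs_right (u - 1)) by lra.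
    assert (Hqa : Rabs q < L).
    { unfold L. generalize (Rabs_triang_inv q (x' 1)). lra. }
    apply Rle_lt_trans with (L * (u - 1)).
    apply Rmult_le_compat_r; lra.
    apply Rlt_le_trans with (L * (e / L)). apply Rmult_lt_compat_l; lra.
    right; field; lra.
Qed.

Lemma inv_sq_int t b : 0 < t -> t <= b -> is_RInt (fun s => / s ^ 2) t b (/ t - / b).
Proof.
  intros Ht Hb.
  assert (H := is_RInt_derive (fun s => - / s) (fun s => / s ^ 2) t b).
  rewrite Rmin_left, Rmax_right in H by lra.
  replace (/ t - / b) with (minus (- / b) (- / t)).
  apply H.
  - intros y Hy. auto_derive. lra. field. lra.
  - intros y Hy. apply (@ex_derive_continuous R_AbsRing R_NormedModule (fun s => / s ^ 2)). auto_derive. assert (0 < y * (y * 1)) by (apply Rmult_lt_0_compat; lra). lra.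
  - unfold minus, plus, opp; simpl. ring.
Qed.

Lemma dbound (k : R -> R) (k_pos : forall s, 1 <= s -> 0 < k s)
  (k_noninc : forall s u, 1 <= s -> s <= u -> k u <= k s)
  I (HI : improper_int_from (fun s => k s / s) 1 I)
  (x x' : R -> R) (xpos : forall t, 1 <= t -> 0 < x t)
  (xJ : forall t, 1 <= t -> exists J,
          improper_int_from (fun s => x s * k s / s ^ 2) t J /\ x' t <= J)
  eps (Heps : 0 < eps) (HP : forall s, 1 <= s -> x s <= x 1 * (2 + eps * s)) :
  forall t, 1 <= t -> x' t <= x 1 * (2 * (k t / t) + eps * I).
Proof.
  intros t Ht. destruct (xJ t Ht) as [J [HJ HxJ]]. eapply Rle_trans; [exact HxJ|].
  assert (x1p : 0 < x 1) by (apply xpos; lra).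
  apply (cmp (fun s => x s * k s / s ^ 2) (fun s => x 1 * (2 * k t * / s ^ 2 + eps * (k s / s))) t J); auto.
  exists t. intros b Hb.
  set (G := fun t : R => (RInt (fun s => k s / s) 1 t : R)).
  assert (H2 : is_RInt (fun s => k s / s) t b (G b - G t)).
  { unfold G. rewrite <- (G_chasles k I HI); try lra. apply (@RInt_correct R_CompleteNormedModule).
    apply (G_ex2 k I HI); lra. }
  assert (H1 := inv_sq_int t b ltac:(lra) ltac:(lra)).
  assert (Hint : is_RInt (fun s => x 1 * (2 * k t * / s ^ 2 + eps * (k s / s))) t b
     (x 1 * (2 * k t * (/ t - / b) + eps * (G b - G t)))).
  { exact (is_RInt_scal _ _ _ (x 1) _ (is_RInt_plus _ _ _ _ _ _
       (is_RInt_scal _ _ _ (2 * k t) _ H1) (is_RInt_scal _ _ _ eps _ H2))). }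
  split; [lra|]. split; [exists (x 1 * (2 * k t * (/ t - / b) + eps * (G b - G t))); exact Hint|].
  split.
  - rewrite (is_RInt_unique _ _ _ _ Hint). apply Rmult_le_compat_l; [lra|].
    assert (Hkt := k_pos t Ht).
    assert (0 <= k t * / b) by (apply Rmult_le_pos; [lra| left; apply Rinv_0_lt_compat; lra]).
    assert (HGt := G_le k k_pos k_noninc I HI t Ht).
    assert (HGb := G_le k k_pos k_noninc I HI b ltac:(lra)).
    fold (G t) in HGt. fold (G b) in HGb.
    assert (eps * (G b - G t) <= eps * I) by (apply Rmult_le_compat_l; lra).
    unfold Rdiv. lra.
  - intros s Hs.
    assert (Hks := k_pos s ltac:(lra)). assert (Hkst := k_noninc t s Ht ltac:(lra)).
    assert (Hxs := HP s ltac:(lra)).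
    assert (Hw : 0 < / s) by (apply Rinv_0_lt_compat; lra).
    assert (Hsw : s * / s = 1) by (field; lra).
    replace (x s * k s / s ^ 2) with (x s * (k s * (/ s * / s))) by (field; lra).
    apply Rle_trans with (x 1 * (2 + eps * s) * (k s * (/ s * / s))).
    { apply Rmult_le_compat_r; auto. apply Rmult_le_pos; [lra|]. apply Rmult_le_pos; lra. }
    replace (x 1 * (2 + eps * s) * (k s * (/ s * / s))) with
       (x 1 * (2 * k s * (/ s * / s) + eps * (k s * / s) * (s * / s))) by ring.
    rewrite Hsw, Rmult_1_r. apply Rmult_le_compat_l; [lra|].
    replace (/ s ^ 2) with (/ s * / s) by (field; lra). unfold Rdiv.
    assert (0 <= / s * / s) by (apply Rmult_le_pos; lra).
    assert (k s * (/ s * / s) <= k t * (/ s * / s)) by (apply Rmult_le_compat_r; lra).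
    lra.
Qed.

Lemma step (k : R -> R) (k_pos : forall s, 1 <= s -> 0 < k s)
  (k_noninc : forall s u, 1 <= s -> s <= u -> k u <= k s)
  I (HI : improper_int_from (fun s => k s / s) 1 I) (HI10 : I < 1 / 10)
  (x x' : R -> R) (xpos : forall t, 1 <= t -> 0 < x t)
  (xd : diff_on_1_infty x x')
  (xJ : forall t, 1 <= t -> exists J,
          improper_int_from (fun s => x s * k s / s ^ 2) t J /\ x' t <= J)
  eps (Heps : 0 < eps) (HP : forall s, 1 <= s -> x s <= x 1 * (2 + eps * s)) :
  forall T, 1 <= T -> x T <= x 1 * (2 + eps / 10 * T).
Proof.
  intros T HT.
  assert (x1p : 0 < x 1) by (apply xpos; lra).
  assert (Hd := dbound k k_pos k_noninc I HI x x' xpos xJ eps Heps HP).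
  set (G := fun t : R => (RInt (fun s => k s / s) 1 t : R)).
  set (g := fun t => x t - x 1 * (1 + 2 * G t + eps / 10 * (t - 1))).
  assert (Hg : g T <= g 1).
  { apply dec_lemma; auto.
    - intros s [Hs1 Hs2] e He.
      set (L := x 1 * (2 * k 1 + eps / 10)).
      assert (Hk1 := k_pos 1 (Rle_refl 1)).
      assert (HL : 0 < L) by (unfold L; apply Rmult_lt_0_compat; lra).
      destruct (xrc x x' xd s Hs1 (e / 2)) as [d1 [Hd1 Hx]]; [lra|].
      exists (Rmin d1 (e / 2 / L)). split.
      { apply Rmin_glb_lt; auto. apply Rdiv_lt_0_compat; lra. }
      intros u [Hu1 Hu2].
      assert (Hud : u < s + d1) by (generalize (Rmin_l d1 (e / 2 / L)); lra).
      assert (Hue : u - s < e / 2 / L) by (generalize (Rmin_r d1 (e / 2 / L)); lra).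
      specialize (Hx u (conj Hu1 Hud)).
      assert (HG := G_right k k_pos k_noninc I HI s u Hs1 Hu1). fold (G u) (G s) in HG.
      assert (HLu : L * (u - s) < e / 2).
      { apply Rlt_le_trans with (L * (e / 2 / L)). apply Rmult_lt_compat_l; lra.
        right; field; lra. }
      assert (H0 : 0 <= x 1 * (2 * (G u - G s) + eps / 10 * (u - s))).
      { assert (0 <= eps / 10 * (u - s)) by (apply Rmult_le_pos; lra).
        apply Rmult_le_pos; lra. }
      assert (H1 : x 1 * (2 * (G u - G s) + eps / 10 * (u - s)) <= L * (u - s)).
      { unfold L. replace (x 1 * (2 * k 1 + eps / 10) * (u - s)) with
          (x 1 * (2 * ((u - s) * k 1) + eps / 10 * (u - s))) by ring.
        apply Rmult_le_compat_l; lra. }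
      unfold g. apply Rabs_def2 in Hx. apply Rabs_def1.
      + replace (x u - x 1 * (1 + 2 * G u + eps / 10 * (u - 1)) -
          (x s - x 1 * (1 + 2 * G s + eps / 10 * (s - 1)))) with
          (x u - x s - x 1 * (2 * (G u - G s) + eps / 10 * (u - s))) by ring. lra.
      + replace (x u - x 1 * (1 + 2 * G u + eps / 10 * (u - 1)) -
          (x s - x 1 * (1 + 2 * G s + eps / 10 * (s - 1)))) with
          (x u - x s - x 1 * (2 * (G u - G s) + eps / 10 * (u - s))) by ring. lra.
    - intros s [Hs1 Hs2].
      set (e := x 1 * (eps * (1 / 10 - I))).
      assert (He : 0 < e) by (unfold e; apply Rmult_lt_0_compat; auto; apply Rmult_lt_0_compat; lra).
      destruct xd as [xd1 _].
      assert (Hdl := proj1 (is_derive_Reals x s (x' s)) (xd1 s Hs1)).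
      destruct (Hdl e He) as [d0 Hd0].
      exists (Rmin d0 (s - 1)). split.
      { apply Rmin_glb_lt. apply cond_pos. lra. }
      intros h [Hh1 Hh2].
      assert (Hh3 : h < d0) by (generalize (Rmin_l d0 (s - 1)); lra).
      assert (Hh4 : h < s - 1) by (generalize (Rmin_r d0 (s - 1)); lra).
      assert (Hq := Hd0 (- h) ltac:(lra) ltac:(rewrite Rabs_Ropp, Rabs_right; lra)).
      set (q := (x (s + - h) - x s) / - h) in Hq.
      assert (Eq : x s - x (s - h) = q * h) by (unfold q, Rminus; field; lra).
      apply Rabs_def2 in Hq.
      assert (Hxs : x s - x (s - h) < h * (x' s + e)).
      { rewrite Eq. assert (0 < h * (x' s + e - q)) by (apply Rmult_lt_0_compat; lra). lra. }
      assert (Hds := Hd s ltac:(lra)).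
      assert (HGl := G_left k k_pos k_noninc I HI s h Hh1 ltac:(lra)).
      fold (G s) (G (s - h)) in HGl.
      assert (Hm1 : x 1 * (2 * (h * (k s / s))) <= x 1 * (2 * (G s - G (s - h)))).
      { apply Rmult_le_compat_l; lra. }
      assert (Hm2 : h * (x' s + e) <= h * (x 1 * (2 * (k s / s) + eps / 10))).
      { apply Rmult_le_compat_l; [lra|]. unfold e.
        replace (x 1 * (2 * (k s / s) + eps / 10)) with
          (x 1 * (2 * (k s / s) + eps * I) + x 1 * (eps * (1 / 10 - I))) by (unfold Rdiv; ring). lra. }
      unfold g.
      replace (x 1 * (1 + 2 * G (s - h) + eps / 10 * (s - h - 1))) with
        (x 1 * (1 + 2 * G s + eps / 10 * (s - 1)) - x 1 * (2 * (G s - G (s - h))) - x 1 * (eps / 10) * h) by ring.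
      replace (h * (x 1 * (2 * (k s / s) + eps / 10))) with
        (x 1 * (2 * (h * (k s / s))) + x 1 * (eps / 10) * h) in Hm2 by ring.
      lra. }
  assert (HG1 : G 1 = 0) by (unfold G; rewrite RInt_point; reflexivity).
  unfold g in Hg. rewrite HG1 in Hg.
  assert (HGT := G_le k k_pos k_noninc I HI T HT). fold (G T) in HGT.
  assert (x 1 * (1 + 2 * G T + eps / 10 * (T - 1)) <= x 1 * (2 + eps / 10 * T)).
  { apply Rmult_le_compat_l; lra. }
  lra.
Qed.

Theorem lemma4p12 (k : R -> R)
  (k_pos : forall s, 1 <= s -> 0 < k s)
  (k_noninc : forall s u, 1 <= s -> s <= u -> k u <= k s)
  (k_int : exists I, improper_int_from (fun s => k s / s) 1 I /\ I < 1 / 10) :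
  exists C, 0 < C /\
    forall (x x' : R -> R),
      (forall t, 1 <= t -> 0 < x t) ->
      diff_on_1_infty x x' ->
      (forall t, 1 <= t -> x t <= t * x 1) ->
      (forall t, 1 <= t -> exists J,
          improper_int_from (fun s => x s * k s / s ^ 2) t J /\ x' t <= J) ->
      forall t, 1 <= t -> x t <= C * x 1.
Proof.
  destruct k_int as [I [HI HI10]]. exists 2. split; [lra|].
  intros x x' xpos xd xb xJ t Ht.
  assert (x1p : 0 < x 1) by (apply xpos; lra).
  assert (HPn : forall n, forall s, 1 <= s -> x s <= x 1 * (2 + / 10 ^ n * s)).
  { induction n as [|n IH].
    - intros s Hs. simpl. rewrite Rinv_1. generalize (xb s Hs). nra.
    - assert (Hp : 0 < / 10 ^ n) by (apply Rinv_0_lt_compat, pow_lt; lra).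
      intros s Hs. replace (/ 10 ^ S n) with (/ 10 ^ n / 10).
      apply (step k k_pos k_noninc I HI HI10 x x' xpos xd xJ (/ 10 ^ n) Hp IH s Hs).
      simpl. field. apply pow_nonzero. lra. }
  apply Rnot_lt_le. intro Hc.
  set (D := x t - 2 * x 1).
  assert (HD : 0 < D) by (unfold D; lra).
  destruct (Pow_x_infinity 10 ltac:(rewrite Rabs_right; lra) (x 1 * t / D + 1)) as [N HN].
  specialize (HN N (le_n N)).
  assert (HP : 0 < 10 ^ N) by (apply pow_lt; lra).
  rewrite Rabs_right in HN by lra.
  specialize (HPn N t Ht).
  assert (H1 : D * 10 ^ N <= x 1 * t).
  { assert (H2 : D <= x 1 * (/ 10 ^ N * t)) by (unfold D; lra).
    apply Rmult_le_compat_r with (r := 10 ^ N) in H2; [|lra].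
    replace (x 1 * (/ 10 ^ N * t) * 10 ^ N) with (x 1 * t) in H2 by (field; lra). exact H2. }
  assert (H3 : x 1 * t / D * D = x 1 * t) by (field; lra).
  assert (H4 : (x 1 * t / D + 1) * D <= 10 ^ N * D) by (apply Rmult_le_compat_r; lra).
  lra.
Qed.
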